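(* Let $F_1$ and $F_2$ be finite fields with $|F_1|\le|F_2|$ and $\mathrm{char}(F_1)=2$. Then there exists a $(|F_1|-1)\times(|F_2|-1)$ Latin-sum array, with rows indexed by $A=F_1\setminus\{0\}$ and columns indexed by $B=F_2\setminus\{0\}$, over the alphabet $F_2\setminus\{0\}$.
   Context: Let $F_1,F_2$ be finite fields with $|F_1|\le|F_2|$, and let $A\subseteq F_1$, $B\subseteq F_2$ with $|A|\le|B|$. A table $L$ of size $|A|\times|B|$ with entries from a set $C$, whose rows are indexed by the elements of $A$ and columns by the elements of $B$ (entry $L_{x,y}$), is called a Latin-sum array over $C$ if for every two distinct pairs $(x_1,y_1),(x_2,y_2)\in A\times B$: (i) if $x_1+x_2=0$ in $F_1$ then $L_{x_1,y_1}\ne L_{x_2,y_2}$; and (ii) if $y_1+y_2=0$ in $F_2$ then $L_{x_1,y_1}\ne L_{x_2,y_2}$. *)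

(* Defs.v *)
From mathcomp Require Import all_boot all_algebra all_field.
Set Implicit Arguments. Unset Strict Implicit. Unset Printing Implicit Defensive.
Import GRing.Theory.
Local Open Scope ring_scope.

(* A table L of size |A| x |B| with entries in the set C: rows indexed by
   A ⊆ F1, columns by B ⊆ F2, entry L x y (values of L outside A × B are
   irrelevant). *)
Definition latin_sum_array (F1 F2 : finFieldType) (A : {set F1}) (B : {set F2})
  (T : eqType) (C : pred T) (L : F1 -> F2 -> T) : Prop :=
  (forall x y, x \in A -> y \in B -> L x y \in C) /\
  (forall x1 y1 x2 y2, x1 \in A -> y1 \in B -> x2 \in A -> y2 \in B ->
     (x1, y1) <> (x2, y2) ->
     (x1 + x2 = 0 -> L x1 y1 <> L x2 y2) /\
     (y1 + y2 = 0 -> L x1 y1 <> L x2 y2)).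

(* Main.v *)
Require Import Defs.
From mathcomp Require Import all_boot all_algebra all_field.
Local Open Scope ring_scope.
Import GRing.Theory.

Theorem lemma18 (F1 F2 : finFieldType) :
  (#|F1| <= #|F2|)%N -> (2 \in [pchar F1])%N ->
  exists L : F1 -> F2 -> F2,
    latin_sum_array [set x : F1 | x != 0] [set y : F2 | y != 0]
      [pred z : F2 | z != 0] L.
Proof.
move=> Hle Hc.
pose g (x : F1) : F2 := enum_val (widen_ord Hle (enum_rank x)).
have ginj : injective g.
  move=> a b /enum_val_inj /(congr1 val) /= /val_inj; exact: enum_rank_inj.
pose i (x : F1) : F2 := g x - g 0.
have iinj : injective i by move=> a b /addIr; exact: ginj.
have i0 : forall x, x != 0 -> i x != 0.
  move=> x Hx; apply/negP => /eqP H; move/negP: Hx; apply; apply/eqP.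
  by apply: iinj; rewrite H /i subrr.
have x_eq : forall x1 x2 : F1, x1 + x2 = 0 -> x1 = x2.
  by move=> x1 x2 /eqP; rewrite addr_eq0 (oppr_pchar2 Hc) => /eqP.
case: (boolP (2 \in [pchar F2])) => Hc2.
- exists (fun x y => y * i x); split.
    move=> x y; rewrite !inE => Hx Hy /=; by rewrite mulf_neq0 // i0.
  move=> x1 y1 x2 y2; rewrite !inE => Hx1 Hy1 Hx2 Hy2 Hne; split.
    move=> /x_eq E; subst x2 => /mulIf H; apply: Hne; rewrite H //; exact: i0.
  move=> /eqP; rewrite addr_eq0 (oppr_pchar2 Hc2) => /eqP E; subst y2.
  move=> /mulfI H; apply: Hne; rewrite (iinj _ _ (H Hy1)) //.
- exists (fun x y => y); split.
    by move=> x y; rewrite !inE.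
  move=> x1 y1 x2 y2; rewrite !inE => Hx1 Hy1 Hx2 Hy2 Hne; split.
    by move=> /x_eq E; subst x2 => H; apply: Hne; rewrite H.
  move=> Hs E; subst y2; move: Hs; rewrite -mulr2n -mulr_natl => /eqP.
  rewrite mulf_eq0 (negbTE Hy1) orbF => H2; move/negP: Hc2; apply.
  rewrite inE /=; exact: H2.
Qed.
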